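(* Let $\epsilon,\gamma>0$. Suppose there is an online algorithm $\mathcal{A}$ for online bipartite matching in the random edge arrival model which, on every instance with $\mathcal{G}(1)\le \frac12+\epsilon$, outputs a matching of expected size at least $\left(\frac12+\gamma\right)|\textsc{OPT}|$. Then there is an online algorithm whose competitive ratio is at least $\frac12+\delta$, where $\delta=\frac{\epsilon\gamma}{\frac12+\epsilon+\gamma}$.
   Context: Online bipartite matching in the random edge arrival model: the edges of a fixed bipartite graph $G$ with $m$ edges arrive one at a time in a uniformly random order $\pi$; the algorithm knows $m$, and must immediately and irrevocably decide for each arriving edge whether to add it to its matching (which must remain a matching). $\textsc{OPT}$ is a maximum matching of $G$. The competitive ratio is the infimum over instances of (expected size of the output, over $\pi$ and internal coins)$/|\textsc{OPT}|$. Greedy adds an arriving edge whenever the current set plus this edge is a matching. For $f\in[0,1]$, $T_f^\pi$ is the matching Greedy produces after the first $fm$ edges of $\pi$, and $\mathcal{G}(f)=\mathbb{E}_\pi[|T_f^\pi|]/|\textsc{OPT}|$ for uniformly random $\pi$. *)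

(* Defs.v *)
From HB Require Import structures.
From mathcomp Require Import all_boot all_order all_algebra.
From mathcomp Require Import perm.
Set Implicit Arguments. Unset Strict Implicit. Unset Printing Implicit Defensive.
Import Order.TTheory GRing.Theory Num.Theory.
Local Open Scope ring_scope.

(* A bipartite graph is a duplicate-free list of edges (u, v) where u is a
   left vertex and v is a right vertex (left and right vertices are labelled
   by nat in two separate name spaces). *)
Definition edge := (nat * nat)%type.

Definition bip_graph (G : seq edge) : bool := uniq G.

Definition can_add (M : seq edge) (e : edge) : bool :=
  (e.1 \notin map fst M) && (e.2 \notin map snd M).

Definition is_matching (M : seq edge) : bool :=
  uniq (map fst M) && uniq (map snd M).

Definition opt_size (G : seq edge) : nat :=
  \max_(S : {set 'I_(size G)} | is_matching [seq nth (0%N, 0%N) G (val i) | i in S]) #|S|.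

Definition arrival (G : seq edge) (s : 'S_(size G)) : seq edge :=
  [seq nth (0%N, 0%N) G (s i) | i <- enum 'I_(size G)].
Arguments arrival : clear implicits.

Definition greedy (arr : seq edge) : seq edge :=
  foldl (fun M e => if can_add M e then rcons M e else M) [::] arr.

Definition greedy_prefix (G : seq edge) (s : 'S_(size G)) (k : nat) : seq edge :=
  greedy (take k (arrival G s)).
Arguments greedy_prefix : clear implicits.

Definition E_perm (R : realFieldType) (G : seq edge) (X : 'S_(size G) -> R) : R :=
  ((size G)`!%:R)^-1 * \sum_(s : 'S_(size G)) X s.
Arguments E_perm {R} G X.

Definition calG1 (R : realFieldType) (G : seq edge) : R :=
  E_perm G (fun s => (size (greedy_prefix G s (size G)))%:R) / (opt_size G)%:R.

(* Randomized online algorithm (behavioural form): knowing m, the history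
   (arrived edges with its own previous decisions) and the current edge,
   it accepts the current edge with probability acc m h e. *)
Record online_alg (R : realFieldType) := OnlineAlg {
  acc : nat -> seq (edge * bool) -> edge -> R;
  acc_ge0 : forall m h e, 0 <= acc m h e;
  acc_le1 : forall m h e, acc m h e <= 1 }.

Definition accepted (h : seq (edge * bool)) : seq edge := map fst (filter snd h).

(* expected final matching size from history h with remaining arrivals arr;
   an acceptance that would violate the matching constraint is not allowed
   (treated as a rejection). *)
Fixpoint run_val (R : realFieldType) (a : seq (edge * bool) -> edge -> R)
    (arr : seq edge) (h : seq (edge * bool)) : R :=
  match arr with
  | [::] => (size (accepted h))%:R
  | e :: rest =>
      let p := if can_add (accepted h) e then a h e else 0 in
      p * run_val a rest (rcons h (e, true))
        + (1 - p) * run_val a rest (rcons h (e, false))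
  end.

Definition alg_value (R : realFieldType) (A : online_alg R) (G : seq edge) : R :=
  E_perm G (fun s => run_val (acc A (size G)) (arrival G s) [::]).

Definition instance (G : seq edge) : Prop := bip_graph G /\ (0 < size G)%N.

Definition comp_ratio_ge (R : realFieldType) (A : online_alg R) (c : R) : Prop :=
  forall G, instance G -> c * (opt_size G)%:R <= alg_value A G.

(* Main.v *)
Require Import Defs.
From HB Require Import structures.
From mathcomp Require Import all_boot all_order all_algebra.
From mathcomp Require Import perm ring lra.
Import Order.TTheory GRing.Theory Num.Theory.
Local Open Scope ring_scope.

Definition gstep (M : seq edge) (e : edge) := if can_add M e then rcons M e else M.

Lemma can_add_sub (M N : seq edge) e :
  {subset M <= N} -> can_add N e -> can_add M e.
Proof.
move=> sMN /andP[h1 h2]; apply/andP; split.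
  apply: contra h1 => /mapP[x xM ->]; apply: map_f; exact: sMN.
apply: contra h2 => /mapP[x xM ->]; apply: map_f; exact: sMN.
Qed.

Lemma greedy_inv (arr M : seq edge) :
  {subset M <= foldl gstep M arr} /\
  (forall e, e \in arr -> ~~ can_add (foldl gstep M arr) e).
Proof.
elim: arr M => [|x arr IH] M /=; first by split.
have [IH1 IH2] := IH (gstep M x).
have sub1 : {subset M <= gstep M x}.
  by move=> y yM; rewrite /gstep; case: ifP => // _; rewrite mem_rcons inE yM orbT.
split; first by move=> y /sub1 /IH1.
move=> e; rewrite inE => /orP[/eqP -> | ]; last exact: IH2.
apply/negP => ca.
have : can_add (gstep M x) x by apply: can_add_sub ca; exact: IH1.
rewrite /gstep; case: ifP => cax.
  by rewrite /can_add map_rcons mem_rcons inE eqxx.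
by rewrite cax.
Qed.

Lemma count_uniq_le (T : eqType) (s F : seq T) :
  uniq s -> (count (mem F) s <= size F)%N.
Proof.
move=> us; rewrite -size_filter; apply: uniq_leq_size.
  exact: filter_uniq.
by move=> x; rewrite mem_filter => /andP[].
Qed.

Lemma matching_le (L M : seq edge) :
  is_matching L ->
  (forall x, x \in L -> ~~ can_add M x) ->
  (size L <= 2 * size M)%N.
Proof.
move=> /andP[u1 u2] blk.
have : (size L <= count (mem (map fst M)) (map fst L) + count (mem (map snd M)) (map snd L))%N.
  rewrite !count_map -count_predUI; apply: leq_trans (leq_addr _ _).
  rewrite -{1}(count_predT L); apply: eq_leq; apply: eq_in_count => x /blk /=.
  by rewrite /can_add negb_and !negbK => /orP[] ->; rewrite ?orbT.
move=> h; apply: leq_trans h _.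
have := @count_uniq_le _ _ (map fst M) u1; have := @count_uniq_le _ _ (map snd M) u2.
rewrite !size_map => a b; rewrite mul2n -addnn; exact: leq_add.
Qed.

Lemma greedy_foldl arr : greedy arr = foldl gstep [::] arr.
Proof. by []. Qed.

Lemma in_arrival (G : seq edge) (s : 'S_(size G)) (i : 'I_(size G)) :
  nth (0%N, 0%N) G i \in arrival G s.
Proof.
rewrite /arrival; apply/mapP; exists (s^-1 i)%g; first by rewrite mem_enum.
by rewrite permKV.
Qed.

Lemma opt_le_greedy (G : seq edge) (s : 'S_(size G)) :
  (opt_size G <= 2 * size (greedy (arrival G s)))%N.
Proof.
rewrite /opt_size; apply/bigmax_leqP => S mS.
have -> : #|S| = size [seq nth (0%N, 0%N) G (val i) | i in S].
  by rewrite size_map cardE.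
apply: matching_le mS _ => x /mapP[i _ ->].
rewrite greedy_foldl; apply: (proj2 (greedy_inv _ _)); exact: in_arrival.
Qed.

Section S.
Variable R : realFieldType.

Lemma accepted_rcons h e b :
  accepted (rcons h (e, b)) = if b then rcons (accepted h) e else accepted h.
Proof. by rewrite /accepted filter_rcons; case: b => //=; rewrite map_rcons. Qed.

Lemma run_greedy arr h :
  run_val (fun _ _ => 1 : R) arr h = (size (foldl gstep (accepted h) arr))%:R.
Proof.
elim: arr h => [|e arr IH] h //=.
rewrite !IH !accepted_rcons /gstep; case: ifP => _; by rewrite ?mul1r ?subrr ?mul0r ?addr0 ?add0r ?subr0 ?mul1r.
Qed.

Lemma run_ge0 (a : seq (edge * bool) -> edge -> R) :
  (forall h e, 0 <= a h e <= 1) -> forall arr h, 0 <= run_val a arr h.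
Proof.
move=> ha; elim=> [|e arr IH] h /=; first by rewrite ler0n.
set p := (if _ then _ else _).
have /andP[p0 p1] : 0 <= p <= 1 by rewrite /p; case: ifP => _; rewrite ?ha ?lexx ?ler01.
by rewrite addr_ge0 // mulr_ge0 // ?IH // subr_ge0.
Qed.

Definition mask (a : seq (edge * bool) -> edge -> R) h e :=
  if can_add (accepted h) e then a h e else 0.
Definition fac a h (x : edge * bool) :=
  if x.2 then mask a h x.1 else 1 - mask a h x.1.
Fixpoint hp a (pre h : seq (edge * bool)) : R :=
  if h is x :: t then fac a pre x * hp a (rcons pre x) t else 1.

Lemma hp_rcons a pre h x : hp a pre (rcons h x) = hp a pre h * fac a (pre ++ h) x.
Proof.
elim: h pre => [|y t IH] pre /=; first by rewrite cats0 mulr1 mul1r.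
by rewrite IH cat_rcons mulrA.
Qed.

Lemma hp_ge0 a : (forall h e, 0 <= a h e <= 1) -> forall h pre, 0 <= hp a pre h.
Proof.
move=> ha; elim=> [|x t IH] pre /=; first exact: ler01.
apply: mulr_ge0 => //; rewrite /fac /mask; case: x.2; case: ifP => _;
  rewrite ?subr0 ?ler01 ?lexx // ?subr_ge0; by case/andP: (ha pre x.1).
Qed.

Variables (a g : seq (edge * bool) -> edge -> R) (p : R).
Hypotheses (ha : forall h e, 0 <= a h e <= 1) (hg : forall h e, 0 <= g h e <= 1)
  (p0 : 0 <= p) (p1 : p <= 1).

Definition wA h := p * hp a [::] h.
Definition wG h := (1 - p) * hp g [::] h.
Definition bfun h e := let W := wA h + wG h in
  if W == 0 then 0 else (wA h * a h e + wG h * g h e) / W.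

Lemma wA_ge0 h : 0 <= wA h. Proof. by rewrite mulr_ge0 // hp_ge0. Qed.
Lemma wG_ge0 h : 0 <= wG h. Proof. by rewrite mulr_ge0 ?subr_ge0 // hp_ge0. Qed.

Lemma bfun_bnd h e : 0 <= bfun h e <= 1.
Proof.
rewrite /bfun; case: eqP => [_|W0]; first by rewrite lexx ler01.
have Wp : 0 < wA h + wG h by rewrite lt0r; apply/andP; split; [apply/eqP|rewrite addr_ge0 ?wA_ge0 ?wG_ge0].
have /andP[a0 a1] := ha h e; have /andP[g0 g1] := hg h e.
have := wA_ge0 h; have := wG_ge0 h => G0 A0.
apply/andP; split; first by apply: divr_ge0; [rewrite addr_ge0 // mulr_ge0 // | exact: ltW].
rewrite ler_pdivrMr // mul1r.
by apply: lerD; rewrite ler_piMr.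
Qed.

Lemma mix_run arr h :
  (wA h + wG h) * run_val bfun arr h = wA h * run_val a arr h + wG h * run_val g arr h.
Proof.
elim: arr h => [|e arr IH] h /=; first by rewrite mulrDl.
have key : (wA h + wG h) * mask bfun h e = wA h * mask a h e + wG h * mask g h e.
  rewrite /mask; case: ifP => _; last by rewrite !mulr0 addr0.
  rewrite /bfun; case: eqP => [W0|W0]; last by rewrite mulrC divfK //; apply/eqP.
  have := wA_ge0 h; have := wG_ge0 h => G0 A0.
  have [-> ->] : wA h = 0 /\ wG h = 0.
    by split; apply/eqP; rewrite eq_le ?A0 ?G0 andbT; [rewrite -W0 lerDl | rewrite -W0 lerDr].
  by rewrite add0r !mul0r add0r.
have eA b : wA (rcons h (e, b)) = wA h * fac a h (e, b) by rewrite /wA hp_rcons mulrA.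
have eG b : wG (rcons h (e, b)) = wG h * fac g h (e, b) by rewrite /wG hp_rcons mulrA.
have wt : wA (rcons h (e, true)) + wG (rcons h (e, true)) = (wA h + wG h) * mask bfun h e
  by rewrite key eA eG.
have wf : wA (rcons h (e, false)) + wG (rcons h (e, false)) = (wA h + wG h) * (1 - mask bfun h e).
  by rewrite mulrBr key eA eG /fac /=; ring.
rewrite -/(mask bfun h e) -/(mask a h e) -/(mask g h e).
rewrite mulrDr !mulrA -wt -wf !IH !eA !eG /fac /=; ring.
Qed.
End S.

Lemma E_perm_lin (R : realFieldType) G (X Y : 'S_(size G) -> R) c d :
  E_perm G (fun s => c * X s + d * Y s) = c * E_perm G X + d * E_perm G Y.
Proof.
rewrite /E_perm big_split /= -!mulr_sumr; ring.
Qed.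

Lemma E_perm_le (R : realFieldType) G (X Y : 'S_(size G) -> R) :
  (forall s, X s <= Y s) -> E_perm G X <= E_perm G Y.
Proof.
move=> h; rewrite /E_perm ler_wpM2l ?invr_ge0 ?ler0n //; exact: ler_sum.
Qed.

Lemma E_perm_cst (R : realFieldType) G (c : R) : E_perm G (fun _ => c) = c.
Proof.
rewrite /E_perm sumr_const card_Sn -[c *+ _]mulr_natl mulrA mulVf ?mul1r //.
by rewrite pnatr_eq0 -lt0n fact_gt0.
Qed.

Lemma E_perm_ext (R : realFieldType) G (X Y : 'S_(size G) -> R) :
  (forall s, X s = Y s) -> E_perm G X = E_perm G Y.
Proof. by move=> h; rewrite /E_perm; congr (_ * _); apply: eq_bigr. Qed.

Lemma size_arrival G s : size (arrival G s) = size G.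
Proof. by rewrite /arrival size_map size_enum_ord. Qed.

Lemma alg_id (R : realFieldType) (eps gam o : R) :
  1/2 + eps + gam != 0 ->
  (1 / 2 + eps / (1/2 + eps + gam) * gam) * o
   = (1 - eps / (1/2 + eps + gam)) * ((1/2 + eps) * o).
Proof.
move=> h; field.
have -> : 1 + eps * 2 + gam * 2 = (1/2 + eps + gam) * 2 by field.
by rewrite mulf_neq0 // pnatr_eq0.
Qed.

Theorem lemma1 (R : realFieldType) (eps gam : R) :
  0 < eps -> 0 < gam ->
  (exists A : online_alg R,
     forall G : seq edge, instance G ->
       calG1 R G <= 1/2 + eps ->
       (1/2 + gam) * (opt_size G)%:R <= alg_value A G) ->
  exists B : online_alg R,
    comp_ratio_ge B (1/2 + eps * gam / (1/2 + eps + gam)).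
Proof.
move=> e0 g0 [A hA].
set D := 1/2 + eps + gam.
have Dp : 0 < D by rewrite /D; lra.
set p := eps / D.
have p0 : 0 <= p by rewrite /p divr_ge0 // ltW.
have p1 : p <= 1 by rewrite /p ler_pdivrMr // mul1r /D; lra.
have hacc m : forall h e, 0 <= acc A m h e <= 1.
  by move=> h e; rewrite acc_ge0 acc_le1.
have hg : forall h e, 0 <= (fun (_ : seq (edge * bool)) (_ : edge) => (1 : R)) h e <= 1.
  by move=> h e; rewrite ler01 lexx.
pose b m := bfun R (acc A m) (fun _ _ => 1) p.
have bb m h e : 0 <= b m h e <= 1 by apply: bfun_bnd.
exists (@OnlineAlg R b (fun m h e => proj1 (andP (bb m h e)))
                       (fun m h e => proj2 (andP (bb m h e)))).
move=> G inst.
set o := (opt_size G)%:R : R.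
set EG := E_perm G (fun s => (size (greedy (arrival G s)))%:R : R).
have val : alg_value (@OnlineAlg R b (fun m h e => proj1 (andP (bb m h e)))
                       (fun m h e => proj2 (andP (bb m h e)))) G
           = p * alg_value A G + (1 - p) * EG.
  rewrite /alg_value /EG -E_perm_lin; apply: E_perm_ext => s /=.
  have := mix_run R _ _ _ (hacc (size G)) hg p0 p1 (arrival G s) [::].
  rewrite /wA /wG /= !mulr1 (_ : p + (1 - p) = 1) ?mul1r; last by ring.
  by move=> ->; rewrite run_greedy.
rewrite val.
have A0 : 0 <= alg_value A G.
  rewrite -(E_perm_cst R G 0); apply: E_perm_le => s; apply: run_ge0; exact: hacc.
have Gh : o / 2 <= EG.
  rewrite -(E_perm_cst R G (o / 2)); apply: E_perm_le => s.
  rewrite ler_pdivrMr // /o -natrM mulnC ler_nat; exact: opt_le_greedy.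
have o0 : 0 <= o by rewrite ler0n.
have eq1 : eps * gam / D = p * gam by rewrite /p; field; rewrite gt_eqF.
rewrite eq1.
case: (lerP (calG1 R G) (1/2 + eps)) => hc.
  have hAG := hA G inst hc.
  have h1 : p * ((1/2 + gam) * o) <= p * alg_value A G by rewrite ler_wpM2l.
  have h2 : (1 - p) * (o / 2) <= (1 - p) * EG by rewrite ler_wpM2l // subr_ge0.
  apply: le_trans _ (lerD h1 h2); rewrite le_eqVlt; apply/orP; left; apply/eqP.
  by field.
have oP : o != 0.
  apply/negP => /eqP o_0; move: hc; rewrite /calG1 -/o o_0 invr0 mulr0 => hc.
  have : 0 < 1/2 + eps :> R by rewrite addr_gt0 // divr_gt0 // ltr0n.
  move=> h0; have := lt_trans h0 hc; by rewrite ltxx.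
have cg : calG1 R G = EG / o.
  rewrite /calG1 /EG; congr (_ / _); apply: E_perm_ext => s.
  by rewrite /greedy_prefix take_oversize // size_arrival.
have hE : (1/2 + eps) * o <= EG.
  rewrite cg in hc; have := ltW hc; rewrite ler_pdivlMr // lt0r oP //.
have h1 : 0 <= p * alg_value A G by rewrite mulr_ge0.
have h2 : (1 - p) * ((1/2 + eps) * o) <= (1 - p) * EG by rewrite ler_wpM2l // subr_ge0.
have eq2 : (1 / 2 + p * gam) * o = (1 - p) * ((1/2 + eps) * o).
  by rewrite /p /D alg_id // gt_eqF.
rewrite eq2; apply: le_trans _ (lerD h1 h2); by rewrite lerDr.
Qed.
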